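(* Let $k\ge 3$. Then $\chi_\rho(S^2_{P_k})=3$ if $k=3$, and $\chi_\rho(S^2_{P_k})=4$ if $k\ge 4$.
   Context: $P_k$ is the path with vertex set $[k]=\{0,\dots,k-1\}$ and edges $\{i,i+1\}$, $0\le i\le k-2$. For a graph $G$ with vertex set $[k]$ and $n\ge 1$, the generalized Sierpi\'nski graph $S^n_G$ has vertex set $[k]^n$, and $u=u_1\cdots u_n$, $v=v_1\cdots v_n$ are adjacent iff there is $i$ with: $u_j=v_j$ for $j<i$; $u_i\neq v_i$ and $u_iv_i\in E(G)$; and $u_j=v_i$, $v_j=u_i$ for all $j>i$. A packing $c$-coloring of a graph $X$ is a map $f:V(X)\to\{1,\dots,c\}$ such that any two distinct vertices $u,v$ with $f(u)=f(v)=i$ satisfy $d_X(u,v)>i$; the packing chromatic number $\chi_\rho(X)$ is the least such $c$. *)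

(* Defs.v *)
From mathcomp Require Import all_boot.
Set Implicit Arguments. Unset Strict Implicit. Unset Printing Implicit Defensive.

Definition path_graph (k : nat) : rel 'I_k :=
  fun i j => (i.+1 == j :> nat) || (j.+1 == i :> nat).

(* Generalized Sierpinski graph S^n_G for G on 'I_k; vertices are words
   u = u_0 ... u_{n-1} (0-based indexing of positions). *)
Definition sierpinski_adj (k n : nat) (G : rel 'I_k) :
    rel {ffun 'I_n -> 'I_k} :=
  fun u v => [exists i : 'I_n,
     [&& [forall j : 'I_n, (j < i) ==> (u j == v j)],
         u i != v i, G (u i) (v i) &
         [forall j : 'I_n, (i < j) ==> ((u j == v i) && (v j == u i))]]].

Definition dist_le (T : finType) (e : rel T) (i : nat) (u v : T) : Prop :=
  exists p : seq T, [/\ path e u p, last u p = v & size p <= i].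

Definition packing_coloring (T : finType) (e : rel T) (c : nat) (f : T -> nat)
  : Prop :=
  (forall x, 1 <= f x <= c) /\
  (forall x y, x != y -> f x = f y -> ~ dist_le e (f x) x y).

Definition packing_colorable (T : finType) (e : rel T) (c : nat) : Prop :=
  exists f : T -> nat, packing_coloring e c f.

Definition packing_chromatic_number_is (T : finType) (e : rel T) (c : nat)
  : Prop :=
  packing_colorable e c /\ forall c', packing_colorable e c' -> c <= c'.

(* Main.v *)
Require Import Defs.
From mathcomp Require Import all_boot.
Set Warnings "-notation-overridden".
From mathcomp Require Import zify.

Definition Dn (a b c d : nat) : nat :=
  if a == c then (b - d) + (d - b)
  else if a < c then (b - a.+1) + (a.+1 - b) + (3 * (c - a) - 2) + (d.+1 - c) + (c - d.+1)
  else (d - c.+1) + (c.+1 - d) + (3 * (a - c) - 2) + (b.+1 - a) + (a - b.+1).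

Definition col (a b : nat) : nat :=
  if b %% 2 == 0 then 1
  else if a %% 2 == 0 then (if b %% 4 == 1 then 2 else 3)
  else if (b + 7 * a) %% 4 == 2 then (if a %% 4 == 1 then 3 else 2)
  else if (b + 7 * a) %% 8 == 0 then 4
  else if a %% 4 == 1 then 2 else 3.

Lemma colE a b : col a b = col (a %% 8) (b %% 8).
Proof.
rewrite /col.
have -> : a %% 8 %% 2 = a %% 2 by lia.
have -> : b %% 8 %% 2 = b %% 2 by lia.
have -> : a %% 8 %% 4 = a %% 4 by lia.
have -> : b %% 8 %% 4 = b %% 4 by lia.
have -> : (b %% 8 + 7 * (a %% 8)) %% 4 = (b + 7 * a) %% 4 by lia.
have -> : (b %% 8 + 7 * (a %% 8)) %% 8 = (b + 7 * a) %% 8 by lia.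
by [].
Qed.

Lemma col_bounds a b : 1 <= col a b <= 4.
Proof. by rewrite /col; repeat case: ifP. Qed.

Lemma Dn_shift m a b c d : Dn (m + a) (m + b) (m + c) (m + d) = Dn a b c d.
Proof.
rewrite /Dn eqn_add2l ltn_add2l.
case: ltngtP => H; lia.
Qed.

Definition Q2 r o1 o2 o3 o4 :=
  [|| o1 == o3, col ((r + o1) %% 8) ((r + o2) %% 8) != col ((r + o3) %% 8) ((r + o4) %% 8)
    | col ((r + o1) %% 8) ((r + o2) %% 8) < Dn o1 o2 o3 o4].

Definition chk2 := all (fun r => all (fun o1 => all (fun o2 => all (fun o3 => all (fun o4 =>
   Q2 r o1 o2 o3 o4) (iota 0 8)) (iota 0 8)) (iota 0 8)) (iota 0 8)) (iota 0 8).

Lemma chk2_ok : chk2. Proof. vm_compute. reflexivity. Qed.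

Definition Q1 ra r o2 o4 :=
  [|| o2 == o4, col ra ((r + o2) %% 8) != col ra ((r + o4) %% 8)
    | col ra ((r + o2) %% 8) < (o2 - o4) + (o4 - o2)].

Definition chk1 := all (fun ra => all (fun r => all (fun o2 => all (fun o4 =>
   Q1 ra r o2 o4) (iota 0 8)) (iota 0 8)) (iota 0 8)) (iota 0 8).

Lemma chk1_ok : chk1. Proof. vm_compute. reflexivity. Qed.

Lemma inI8 {x} : x < 8 -> x \in iota 0 8.
Proof. by rewrite mem_iota. Qed.

Lemma colS m o b : b = m + o -> col ((m %% 8 + o) %% 8) = col (b %% 8).
Proof. move=> ->; congr col; lia. Qed.

Lemma col_sep a b c d : (a != c) || (b != d) -> col a b = col c d -> Dn a b c d <= col a b -> False.
Proof.
move=> hne hc hD.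
have hb := col_bounds a b.
case: (eqVneq a c) hne hD hc => [<-|hac] /= hne hD hc.
- rewrite /Dn eqxx in hD.
  set m := minn b d.
  have ob : b - m < 8 by lia.
  have od : d - m < 8 by lia.
  move: chk1_ok => /allP /(_ (a %% 8) (inI8 (@ltn_pmod a 8 isT))) /allP /(_ (m %% 8) (inI8 (@ltn_pmod m 8 isT)))
     /allP /(_ _ (inI8 ob)) /allP /(_ _ (inI8 od)).
  rewrite /Q1.
  have e1 : (m %% 8 + (b - m)) %% 8 = b %% 8 by lia.
  have e2 : (m %% 8 + (d - m)) %% 8 = d %% 8 by lia.
  rewrite e1 e2 -!colE -hc.
  case/or3P => [/eqP|/eqP|]; lia.
- set m := minn (minn a b) (minn c d).
  have hDa : Dn a b c d <= 4 by lia.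
  have /and4P [o1 o2 o3 o4] : [&& a - m < 8, b - m < 8, c - m < 8 & d - m < 8].
    move: hDa; rewrite /Dn (negPf hac); case: ltngtP => H; lia.
  move: chk2_ok => /allP /(_ (m %% 8) (inI8 (@ltn_pmod m 8 isT))) /allP /(_ _ (inI8 o1))
     /allP /(_ _ (inI8 o2)) /allP /(_ _ (inI8 o3)) /allP /(_ _ (inI8 o4)).
  rewrite /Q2.
  have E x : m <= x -> (m %% 8 + (x - m)) %% 8 = x %% 8 by lia.
  rewrite !E; try lia.
  rewrite -!colE -hc.
  have -> : Dn (a - m) (b - m) (c - m) (d - m) = Dn a b c d.
    rewrite -(Dn_shift m); congr Dn; lia.
  case/or3P => [/eqP|/eqP|]; lia.
Qed.

Definition pos1 {k} (u : {ffun 'I_2 -> 'I_k}) : nat := val (u ord0).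
Definition pos2 {k} (u : {ffun 'I_2 -> 'I_k}) : nat := val (u ord_max).

Definition step (c d c' d' : nat) : Prop :=
  (c = c' /\ (d.+1 = d' \/ d'.+1 = d)) \/ (d = c' /\ d' = c /\ (c.+1 = c' \/ c'.+1 = c)).

Lemma adj_char k (u v : {ffun 'I_2 -> 'I_k}) : @sierpinski_adj k 2 (@path_graph k) u v ->
  step (pos1 u) (pos2 u) (pos1 v) (pos2 v).
Proof.
rewrite /step /pos1 /pos2.
case/existsP => i /and4P [h1 h2 h3 h4].
case: i h1 h2 h3 h4 => [[|[|//]] Hi] h1 h2 h3 h4.
- have E : Ordinal Hi = ord0 by apply: val_inj.
  rewrite E in h1 h2 h3 h4.
  move/forallP: h4 => /(_ ord_max) /= /andP [/eqP -> /eqP ->].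
  right; split=> //; split=> //.
  by move: h3; rewrite /path_graph => /orP [/eqP|/eqP]; [left|right].
- have E : Ordinal Hi = ord_max by apply: val_inj.
  rewrite E in h1 h2 h3 h4.
  move/forallP: h1 => /(_ ord0) /= /eqP ->.
  left; split=> //.
  by move: h3; rewrite /path_graph => /orP [/eqP|/eqP]; [left|right].
Qed.

Lemma adj_of k (u v : {ffun 'I_2 -> 'I_k}) : step (pos1 u) (pos2 u) (pos1 v) (pos2 v) ->
  @sierpinski_adj k 2 (@path_graph k) u v.
Proof.
rewrite /step /pos1 /pos2 => H.
apply/existsP.
case: H => [[e1 e2]|[e1 [e2 e3]]].
- exists ord_max; apply/and4P; split.
  + apply/forallP => j; apply/implyP => hj; apply/eqP/val_inj.
    have -> : j = ord0 by apply: val_inj; case: j hj => [[|[|]]].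
    exact: e1.
  + by apply/negP => /eqP E; move: e2; rewrite E; lia.
  + by rewrite /path_graph; case: e2 => ->; rewrite eqxx ?orbT.
  + by apply/forallP => j; apply/implyP; case: j => [[|[|]]].
- exists ord0; apply/and4P; split.
  + by apply/forallP => j; apply/implyP; case: j => [[|[|]]].
  + by apply/negP => /eqP E; move: e3; rewrite E; lia.
  + by rewrite /path_graph; case: e3 => ->; rewrite eqxx ?orbT.
  + apply/forallP => j; apply/implyP => hj.
    have -> : j = ord_max by apply: val_inj; case: j hj => [[|[|]]].
    by apply/andP; split; apply/eqP/val_inj.
Qed.

Lemma Dn_lip a b c d c' d' : step c d c' d' -> Dn a b c' d' <= (Dn a b c d).+1.
Proof.
rewrite /step /Dn => H.
case: (ltngtP a c) => h1; case: (ltngtP a c') => h2; lia.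
Qed.

Lemma walk_D k (x : {ffun 'I_2 -> 'I_k}) p u :
  path (@sierpinski_adj k 2 (@path_graph k)) u p ->
  Dn (pos1 x) (pos2 x) (pos1 (last u p)) (pos2 (last u p)) <=
  Dn (pos1 x) (pos2 x) (pos1 u) (pos2 u) + size p.
Proof.
elim: p u => [|v p IH] u /=; first by rewrite addn0.
case/andP => /adj_char h hp.
apply: leq_trans (IH v hp) _.
have := Dn_lip (pos1 x) (pos2 x) _ _ _ _ h; lia.
Qed.

Lemma Dn_refl a b : Dn a b a b = 0.
Proof. by rewrite /Dn eqxx subnn. Qed.

Lemma pos_inj k (x y : {ffun 'I_2 -> 'I_k}) : pos1 x = pos1 y -> pos2 x = pos2 y -> x = y.
Proof.
rewrite /pos1 /pos2 => h1 h2; apply/ffunP => i.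
case: i => [[|[|//]] Hi].
- have -> : Ordinal Hi = ord0 by apply: val_inj.
  exact: val_inj.
- have -> : Ordinal Hi = ord_max by apply: val_inj.
  exact: val_inj.
Qed.

Lemma colorable_of k (g : nat -> nat -> nat) c :
  (forall a b, a < k -> b < k -> 1 <= g a b <= c) ->
  (forall a b a' b', a < k -> b < k -> a' < k -> b' < k ->
     (a != a') || (b != b') -> g a b = g a' b' -> Dn a b a' b' <= g a b -> False) ->
  packing_colorable (@sierpinski_adj k 2 (@path_graph k)) c.
Proof.
move=> hb hs.
exists (fun u => g (pos1 u) (pos2 u)); split.
- by move=> x; apply: hb; apply: ltn_ord.
- move=> x y hxy he [p [hp hl hsz]].
  have := walk_D _ x _ _ hp; rewrite hl Dn_refl add0n => hD.
  apply: (hs _ _ _ _ (ltn_ord _) (ltn_ord _) (ltn_ord _) (ltn_ord _) _ he).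
  + case: (eqVneq (pos1 x) (pos1 y)) => [h1|//]; case: (eqVneq (pos2 x) (pos2 y)) => [h2|//].
    by move/eqP: hxy; case; apply: pos_inj _ _ _ h1 h2.
  + exact: leq_trans hD hsz.
Qed.

Definition col3 (a b : nat) : nat := if b == 1 then (if a == 1 then 3 else 2) else 1.

Definition chk3 := all (fun a => all (fun b => all (fun c => all (fun d =>
  [|| (a == c) && (b == d), col3 a b != col3 c d | col3 a b < Dn a b c d])
  (iota 0 3)) (iota 0 3)) (iota 0 3)) (iota 0 3).

Lemma chk3_ok : chk3. Proof. vm_compute. reflexivity. Qed.

Lemma inI3 {x} : x < 3 -> x \in iota 0 3.
Proof. by rewrite mem_iota. Qed.

Lemma col3_sep a b c d : a < 3 -> b < 3 -> c < 3 -> d < 3 ->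
  (a != c) || (b != d) -> col3 a b = col3 c d -> Dn a b c d <= col3 a b -> False.
Proof.
move=> ha hb hc hd hne he hD.
move: chk3_ok => /allP /(_ _ (inI3 ha)) /allP /(_ _ (inI3 hb)) /allP /(_ _ (inI3 hc))
  /allP /(_ _ (inI3 hd)).
case/or3P => [/andP [/eqP e1 /eqP e2]|/eqP //|]; last by lia.
by move: hne; rewrite e1 e2 !eqxx.
Qed.

Definition mkv n (a b : 'I_n) : {ffun 'I_2 -> 'I_n} :=
  [ffun i : 'I_2 => if val i == 0 then a else b].

Definition vtx n (a b : nat) : {ffun 'I_2 -> 'I_n.+1} := @mkv n.+1 (inord a) (inord b).

Lemma pos_vtx1 n a b : a < n.+1 -> pos1 (vtx n a b) = a.
Proof. by move=> h; rewrite /pos1 /vtx /mkv ffunE /= inordK. Qed.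

Lemma pos_vtx2 n a b : b < n.+1 -> pos2 (vtx n a b) = b.
Proof. by move=> h; rewrite /pos2 /vtx /mkv ffunE /= inordK. Qed.

Lemma vtx_neq n a b c d : a < n.+1 -> b < n.+1 -> c < n.+1 -> d < n.+1 ->
  (a != c) || (b != d) -> vtx n a b != vtx n c d.
Proof.
move=> ha hb hc hd hne; apply/eqP => E.
have := congr1 pos1 E; have := congr1 pos2 E.
rewrite !pos_vtx1 // !pos_vtx2 // => e2 e1.
by move: hne; rewrite e1 e2 !eqxx.
Qed.

Lemma pc (T : eqType) (e : rel T) x y p : e x y -> path e y p -> path e x (y :: p).
Proof. by move=> h1 h2; rewrite /= h1 h2. Qed.

Lemma dist_le_mono (T : finType) (e : rel T) i j x y :
  dist_le e i x y -> i <= j -> dist_le e j x y.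
Proof. by move=> [p [h1 h2 h3]] hij; exists p; split=> //; apply: leq_trans h3 hij. Qed.

Lemma sep_use (T : finType) (e : rel T) c f (hf : packing_coloring e c f) x y d :
  x != y -> dist_le e d x y -> f x = f y -> d <= f x -> False.
Proof.
move: hf => [_ hs] hxy hd he hle.
apply: (hs x y hxy he).
exact: (dist_le_mono _ _ _ _ _ _ hd hle).
Qed.

Arguments sep_use {T e c f}.

Ltac adjtac := apply: adj_of; rewrite /step !pos_vtx1 // !pos_vtx2 //; lia.

Definition Cb_4 (x10 x11 x12 x13 x20 x21 x22 x23 : nat) : bool := (~~ ((x10 == x11) && (1 <= x10))) && (~~ ((x10 == x12) && (2 <= x10))) && (~~ ((x10 == x13) && (3 <= x10))) && (~~ ((x10 == x21) && (3 <= x10))) && (~~ ((x11 == x12) && (1 <= x11))) && (~~ ((x11 == x13) && (2 <= x11))) && (~~ ((x11 == x20) && (3 <= x11))) && (~~ ((x11 == x21) && (2 <= x11))) && (~~ ((x11 == x22) && (3 <= x11))) && (~~ ((x12 == x13) && (1 <= x12))) && (~~ ((x12 == x20) && (2 <= x12))) && (~~ ((x12 == x21) && (1 <= x12))) && (~~ ((x12 == x22) && (2 <= x12))) && (~~ ((x12 == x23) && (3 <= x12))) && (~~ ((x13 == x20) && (3 <= x13))) && (~~ ((x13 == x21) && (2 <= x13))) && (~~ ((x13 == x22) && (3 <= x13))) && (~~ ((x20 == x21) && (1 <= x20))) && (~~ ((x20 == x22) && (2 <= x20))) && (~~ ((x20 == x23) && (3 <= x20))) && (~~ ((x21 == x22)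 && (1 <= x21))) && (~~ ((x21 == x23) && (2 <= x21))) && (~~ ((x22 == x23) && (1 <= x22))).
Lemma comb_4 : all (fun x10 => all (fun x11 => all (fun x12 => all (fun x13 => all (fun x20 => all (fun x21 => all (fun x22 => all (fun x23 => ~~ Cb_4 x10 x11 x12 x13 x20 x21 x22 x23) [:: 1; 2; 3]) [:: 1; 2; 3]) [:: 1; 2; 3]) [:: 1; 2; 3]) [:: 1; 2; 3]) [:: 1; 2; 3]) [:: 1; 2; 3]) [:: 1; 2; 3].
Proof. vm_compute. reflexivity. Qed.

Definition Cb_3 (x02 x01 x10 x11 : nat) : bool := (~~ ((x02 == x01) && (1 <= x02))) && (~~ ((x02 == x10) && (2 <= x02))) && (~~ ((x01 == x10) && (1 <= x01))) && (~~ ((x01 == x11) && (2 <= x01))) && (~~ ((x10 == x11) && (1 <= x10))).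
Lemma comb_3 : all (fun x02 => all (fun x01 => all (fun x10 => all (fun x11 => ~~ Cb_3 x02 x01 x10 x11) [:: 1; 2]) [:: 1; 2]) [:: 1; 2]) [:: 1; 2].
Proof. vm_compute. reflexivity. Qed.


Theorem proposition3 (k : nat) (hk : 3 <= k) :
  packing_chromatic_number_is (@sierpinski_adj k 2 (@path_graph k))
    (if k == 3 then 3 else 4).
Proof.
case E: (k == 3).
- move/eqP: E => E; subst k; rewrite /=; split.
  + apply: (colorable_of _ col3).
    * by move=> a b _ _; rewrite /col3; case: ifP => _; [case: ifP|].
    * exact: col3_sep.
  + move=> c' [f hf]; rewrite leqNgt; apply/negP => hc.
    have hin x : f x \in [:: 1; 2].
      by move: hf => [hb _]; have := hb x; rewrite !inE; lia.
have h_x02_x01 : f (vtx 2 0 2) = f (vtx 2 0 1) -> 1 <= f (vtx 2 0 2) -> False.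
  apply: (sep_use hf (vtx 2 0 2) (vtx 2 0 1) 1); first by apply: vtx_neq.
  exists [:: (vtx 2 0 1)]; split; [repeat (apply: pc; first by adjtac); done | by [] | by []].
have h_x02_x10 : f (vtx 2 0 2) = f (vtx 2 1 0) -> 2 <= f (vtx 2 0 2) -> False.
  apply: (sep_use hf (vtx 2 0 2) (vtx 2 1 0) 2); first by apply: vtx_neq.
  exists [:: (vtx 2 0 1); (vtx 2 1 0)]; split; [repeat (apply: pc; first by adjtac); done | by [] | by []].
have h_x01_x10 : f (vtx 2 0 1) = f (vtx 2 1 0) -> 1 <= f (vtx 2 0 1) -> False.
  apply: (sep_use hf (vtx 2 0 1) (vtx 2 1 0) 1); first by apply: vtx_neq.
  exists [:: (vtx 2 1 0)]; split; [repeat (apply: pc; first by adjtac); done | by [] | by []].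
have h_x01_x11 : f (vtx 2 0 1) = f (vtx 2 1 1) -> 2 <= f (vtx 2 0 1) -> False.
  apply: (sep_use hf (vtx 2 0 1) (vtx 2 1 1) 2); first by apply: vtx_neq.
  exists [:: (vtx 2 1 0); (vtx 2 1 1)]; split; [repeat (apply: pc; first by adjtac); done | by [] | by []].
have h_x10_x11 : f (vtx 2 1 0) = f (vtx 2 1 1) -> 1 <= f (vtx 2 1 0) -> False.
  apply: (sep_use hf (vtx 2 1 0) (vtx 2 1 1) 1); first by apply: vtx_neq.
  exists [:: (vtx 2 1 1)]; split; [repeat (apply: pc; first by adjtac); done | by [] | by []].
move: (comb_3) => /allP /(_ _ (hin (vtx 2 0 2))) /allP /(_ _ (hin (vtx 2 0 1))) /allP /(_ _ (hin (vtx 2 1 0))) /allP /(_ _ (hin (vtx 2 1 1))) /negP; apply.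
rewrite /Cb_3; repeat (apply/andP; split); apply/negP => /andP [/eqP E L];
  match goal with H : _ -> _ -> False |- _ => exact: (H E L) end.
- have hk4 : 4 <= k by move/negbT: E; lia.
  case: k hk hk4 {E} => [|[|[|[|k']]]] // _ _; split.
  + apply: (colorable_of _ col).
    * by move=> a b _ _; apply: col_bounds.
    * by move=> a b a' b' _ _ _ _; apply: col_sep.
  + move=> c' [f hf]; rewrite leqNgt; apply/negP => hc.
    have hin x : f x \in [:: 1; 2; 3].
      by move: hf => [hb _]; have := hb x; rewrite !inE; lia.
have h_x10_x11 : f (vtx k'.+3 1 0) = f (vtx k'.+3 1 1) -> 1 <= f (vtx k'.+3 1 0) -> False.
  apply: (sep_use hf (vtx k'.+3 1 0) (vtx k'.+3 1 1) 1); first by apply: vtx_neq.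
  exists [:: (vtx k'.+3 1 1)]; split; [repeat (apply: pc; first by adjtac); done | by [] | by []].
have h_x10_x12 : f (vtx k'.+3 1 0) = f (vtx k'.+3 1 2) -> 2 <= f (vtx k'.+3 1 0) -> False.
  apply: (sep_use hf (vtx k'.+3 1 0) (vtx k'.+3 1 2) 2); first by apply: vtx_neq.
  exists [:: (vtx k'.+3 1 1); (vtx k'.+3 1 2)]; split; [repeat (apply: pc; first by adjtac); done | by [] | by []].
have h_x10_x13 : f (vtx k'.+3 1 0) = f (vtx k'.+3 1 3) -> 3 <= f (vtx k'.+3 1 0) -> False.
  apply: (sep_use hf (vtx k'.+3 1 0) (vtx k'.+3 1 3) 3); first by apply: vtx_neq.
  exists [:: (vtx k'.+3 1 1); (vtx k'.+3 1 2); (vtx k'.+3 1 3)]; split; [repeat (apply: pc; first by adjtac); done | by [] | by []].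
have h_x10_x21 : f (vtx k'.+3 1 0) = f (vtx k'.+3 2 1) -> 3 <= f (vtx k'.+3 1 0) -> False.
  apply: (sep_use hf (vtx k'.+3 1 0) (vtx k'.+3 2 1) 3); first by apply: vtx_neq.
  exists [:: (vtx k'.+3 1 1); (vtx k'.+3 1 2); (vtx k'.+3 2 1)]; split; [repeat (apply: pc; first by adjtac); done | by [] | by []].
have h_x11_x12 : f (vtx k'.+3 1 1) = f (vtx k'.+3 1 2) -> 1 <= f (vtx k'.+3 1 1) -> False.
  apply: (sep_use hf (vtx k'.+3 1 1) (vtx k'.+3 1 2) 1); first by apply: vtx_neq.
  exists [:: (vtx k'.+3 1 2)]; split; [repeat (apply: pc; first by adjtac); done | by [] | by []].
have h_x11_x13 : f (vtx k'.+3 1 1) = f (vtx k'.+3 1 3) -> 2 <= f (vtx k'.+3 1 1) -> False.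
  apply: (sep_use hf (vtx k'.+3 1 1) (vtx k'.+3 1 3) 2); first by apply: vtx_neq.
  exists [:: (vtx k'.+3 1 2); (vtx k'.+3 1 3)]; split; [repeat (apply: pc; first by adjtac); done | by [] | by []].
have h_x11_x20 : f (vtx k'.+3 1 1) = f (vtx k'.+3 2 0) -> 3 <= f (vtx k'.+3 1 1) -> False.
  apply: (sep_use hf (vtx k'.+3 1 1) (vtx k'.+3 2 0) 3); first by apply: vtx_neq.
  exists [:: (vtx k'.+3 1 2); (vtx k'.+3 2 1); (vtx k'.+3 2 0)]; split; [repeat (apply: pc; first by adjtac); done | by [] | by []].
have h_x11_x21 : f (vtx k'.+3 1 1) = f (vtx k'.+3 2 1) -> 2 <= f (vtx k'.+3 1 1) -> False.
  apply: (sep_use hf (vtx k'.+3 1 1) (vtx k'.+3 2 1) 2); first by apply: vtx_neq.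
  exists [:: (vtx k'.+3 1 2); (vtx k'.+3 2 1)]; split; [repeat (apply: pc; first by adjtac); done | by [] | by []].
have h_x11_x22 : f (vtx k'.+3 1 1) = f (vtx k'.+3 2 2) -> 3 <= f (vtx k'.+3 1 1) -> False.
  apply: (sep_use hf (vtx k'.+3 1 1) (vtx k'.+3 2 2) 3); first by apply: vtx_neq.
  exists [:: (vtx k'.+3 1 2); (vtx k'.+3 2 1); (vtx k'.+3 2 2)]; split; [repeat (apply: pc; first by adjtac); done | by [] | by []].
have h_x12_x13 : f (vtx k'.+3 1 2) = f (vtx k'.+3 1 3) -> 1 <= f (vtx k'.+3 1 2) -> False.
  apply: (sep_use hf (vtx k'.+3 1 2) (vtx k'.+3 1 3) 1); first by apply: vtx_neq.
  exists [:: (vtx k'.+3 1 3)]; split; [repeat (apply: pc; first by adjtac); done | by [] | by []].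
have h_x12_x20 : f (vtx k'.+3 1 2) = f (vtx k'.+3 2 0) -> 2 <= f (vtx k'.+3 1 2) -> False.
  apply: (sep_use hf (vtx k'.+3 1 2) (vtx k'.+3 2 0) 2); first by apply: vtx_neq.
  exists [:: (vtx k'.+3 2 1); (vtx k'.+3 2 0)]; split; [repeat (apply: pc; first by adjtac); done | by [] | by []].
have h_x12_x21 : f (vtx k'.+3 1 2) = f (vtx k'.+3 2 1) -> 1 <= f (vtx k'.+3 1 2) -> False.
  apply: (sep_use hf (vtx k'.+3 1 2) (vtx k'.+3 2 1) 1); first by apply: vtx_neq.
  exists [:: (vtx k'.+3 2 1)]; split; [repeat (apply: pc; first by adjtac); done | by [] | by []].
have h_x12_x22 : f (vtx k'.+3 1 2) = f (vtx k'.+3 2 2) -> 2 <= f (vtx k'.+3 1 2) -> False.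
  apply: (sep_use hf (vtx k'.+3 1 2) (vtx k'.+3 2 2) 2); first by apply: vtx_neq.
  exists [:: (vtx k'.+3 2 1); (vtx k'.+3 2 2)]; split; [repeat (apply: pc; first by adjtac); done | by [] | by []].
have h_x12_x23 : f (vtx k'.+3 1 2) = f (vtx k'.+3 2 3) -> 3 <= f (vtx k'.+3 1 2) -> False.
  apply: (sep_use hf (vtx k'.+3 1 2) (vtx k'.+3 2 3) 3); first by apply: vtx_neq.
  exists [:: (vtx k'.+3 2 1); (vtx k'.+3 2 2); (vtx k'.+3 2 3)]; split; [repeat (apply: pc; first by adjtac); done | by [] | by []].
have h_x13_x20 : f (vtx k'.+3 1 3) = f (vtx k'.+3 2 0) -> 3 <= f (vtx k'.+3 1 3) -> False.
  apply: (sep_use hf (vtx k'.+3 1 3) (vtx k'.+3 2 0) 3); first by apply: vtx_neq.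
  exists [:: (vtx k'.+3 1 2); (vtx k'.+3 2 1); (vtx k'.+3 2 0)]; split; [repeat (apply: pc; first by adjtac); done | by [] | by []].
have h_x13_x21 : f (vtx k'.+3 1 3) = f (vtx k'.+3 2 1) -> 2 <= f (vtx k'.+3 1 3) -> False.
  apply: (sep_use hf (vtx k'.+3 1 3) (vtx k'.+3 2 1) 2); first by apply: vtx_neq.
  exists [:: (vtx k'.+3 1 2); (vtx k'.+3 2 1)]; split; [repeat (apply: pc; first by adjtac); done | by [] | by []].
have h_x13_x22 : f (vtx k'.+3 1 3) = f (vtx k'.+3 2 2) -> 3 <= f (vtx k'.+3 1 3) -> False.
  apply: (sep_use hf (vtx k'.+3 1 3) (vtx k'.+3 2 2) 3); first by apply: vtx_neq.
  exists [:: (vtx k'.+3 1 2); (vtx k'.+3 2 1); (vtx k'.+3 2 2)]; split; [repeat (apply: pc; first by adjtac); done | by [] | by []].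
have h_x20_x21 : f (vtx k'.+3 2 0) = f (vtx k'.+3 2 1) -> 1 <= f (vtx k'.+3 2 0) -> False.
  apply: (sep_use hf (vtx k'.+3 2 0) (vtx k'.+3 2 1) 1); first by apply: vtx_neq.
  exists [:: (vtx k'.+3 2 1)]; split; [repeat (apply: pc; first by adjtac); done | by [] | by []].
have h_x20_x22 : f (vtx k'.+3 2 0) = f (vtx k'.+3 2 2) -> 2 <= f (vtx k'.+3 2 0) -> False.
  apply: (sep_use hf (vtx k'.+3 2 0) (vtx k'.+3 2 2) 2); first by apply: vtx_neq.
  exists [:: (vtx k'.+3 2 1); (vtx k'.+3 2 2)]; split; [repeat (apply: pc; first by adjtac); done | by [] | by []].
have h_x20_x23 : f (vtx k'.+3 2 0) = f (vtx k'.+3 2 3) -> 3 <= f (vtx k'.+3 2 0) -> False.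
  apply: (sep_use hf (vtx k'.+3 2 0) (vtx k'.+3 2 3) 3); first by apply: vtx_neq.
  exists [:: (vtx k'.+3 2 1); (vtx k'.+3 2 2); (vtx k'.+3 2 3)]; split; [repeat (apply: pc; first by adjtac); done | by [] | by []].
have h_x21_x22 : f (vtx k'.+3 2 1) = f (vtx k'.+3 2 2) -> 1 <= f (vtx k'.+3 2 1) -> False.
  apply: (sep_use hf (vtx k'.+3 2 1) (vtx k'.+3 2 2) 1); first by apply: vtx_neq.
  exists [:: (vtx k'.+3 2 2)]; split; [repeat (apply: pc; first by adjtac); done | by [] | by []].
have h_x21_x23 : f (vtx k'.+3 2 1) = f (vtx k'.+3 2 3) -> 2 <= f (vtx k'.+3 2 1) -> False.
  apply: (sep_use hf (vtx k'.+3 2 1) (vtx k'.+3 2 3) 2); first by apply: vtx_neq.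
  exists [:: (vtx k'.+3 2 2); (vtx k'.+3 2 3)]; split; [repeat (apply: pc; first by adjtac); done | by [] | by []].
have h_x22_x23 : f (vtx k'.+3 2 2) = f (vtx k'.+3 2 3) -> 1 <= f (vtx k'.+3 2 2) -> False.
  apply: (sep_use hf (vtx k'.+3 2 2) (vtx k'.+3 2 3) 1); first by apply: vtx_neq.
  exists [:: (vtx k'.+3 2 3)]; split; [repeat (apply: pc; first by adjtac); done | by [] | by []].
move: (comb_4) => /allP /(_ _ (hin (vtx k'.+3 1 0))) /allP /(_ _ (hin (vtx k'.+3 1 1))) /allP /(_ _ (hin (vtx k'.+3 1 2))) /allP /(_ _ (hin (vtx k'.+3 1 3))) /allP /(_ _ (hin (vtx k'.+3 2 0))) /allP /(_ _ (hin (vtx k'.+3 2 1))) /allP /(_ _ (hin (vtx k'.+3 2 2))) /allP /(_ _ (hin (vtx k'.+3 2 3))) /negP; apply.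
rewrite /Cb_4; repeat (apply/andP; split); apply/negP => /andP [/eqP E L];
  match goal with H : _ -> _ -> False |- _ => exact: (H E L) end.
Qed.
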